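(* Let $k$ be admissible. Let $R=\mathrm{ad}(U(\mathfrak g))Q$ and $R^T=\mathrm{ad}(U(\mathfrak g))Q^T$. Let $u_1\ne0$ be an element of the zero-weight subspace $R_0$ of $R$, and $u_2\ne0$ an element of the zero-weight subspace $R^T_0$ of $R^T$. Let $p_1,p_2\in\mathbb C[h]$ be the unique polynomials with $$u_1\equiv p_1(h)\mod U(\mathfrak g)\mathfrak n_+,\qquad u_2\equiv p_2(h)\mod U(\mathfrak g)\mathfrak n_-.$$ Then for $\mu\in\mathfrak h^*$ the following are equivalent: (1) the irreducible highest weight $\mathfrak g$-module $V(\mu)$ is an $A(L(k,0))$-module; (2) $p_1(\mu)=0$; (3) $p_2(-\mu)=0$. Here $p(\mu)$ denotes $p$ evaluated at $h=\mu(h)$.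
   Context: $\mathfrak g=sl(2,\mathbb C)$ has basis $e,f,h$ with the usual relations, $\mathfrak h=\mathbb Ch$, $\mathfrak n_+=\mathbb Ce$, $\mathfrak n_-=\mathbb Cf$. The adjoint action is $\mathrm{ad}(x)u=xu-ux$. $x\mapsto x^T$ is the anti-automorphism of $U(\mathfrak g)$ with $x^T=-x$ for $x\in\mathfrak g$. $k=p/q$ is admissible: $q\in\mathbb N$, $p\in\mathbb Z$, $\gcd(p,q)=1$, $2q+p-2\ge0$. $L(k,0)$ is the simple quotient VOA of the level-$k$ vacuum $\hat{\mathfrak g}$-module $M(k,0)$, by the ideal generated by its singular vector $v_{sing}$. $Q=F([v_{sing}])\in U(\mathfrak g)$, where $F:A(M(k,0))\to U(\mathfrak g)$ is the isomorphism of Zhu's algebra given by $F[a_1(-i_1-1)\cdots a_n(-i_n-1)\mathbf 1]=(-1)^{i_1+\cdots+i_n}a_n\cdots a_1$. Then $A(L(k,0))\cong U(\mathfrak g)/\langle Q\rangle$, and a $\mathfrak g$-module is an $A(L(k,0))$-module iff it is annihilated by $Q$. $R$ and $R^T$ are irreducible $\mathfrak g$-modules isomorphic to $V(2N\omega)$, where $N=2q+p-1$ and $\omega$ is the fundamental weight ($\omega(h)=1$). Hence $R_0$ and $R^T_0$ are one-dimensional. *)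

(* Defs.v *)
From HB Require Import structures.
From mathcomp Require Import all_boot all_order all_algebra.
Set Implicit Arguments. Unset Strict Implicit. Unset Printing Implicit Defensive.
Import Order.TTheory GRing.Theory Num.Theory.
Local Open Scope ring_scope.

Section Sl2.
Variables (C : numClosedFieldType) (U : algType C).

Definition lie (x y : U) : U := x * y - y * x.

Definition sl2_relations (e f h : U) : Prop :=
  [/\ lie h e = e *+ 2, lie h f = - (f *+ 2) & lie e f = h].

Definition pbw_mono (e f h : U) (a b c : nat) : U := f ^+ a * h ^+ b * e ^+ c.

Definition pbw_rep (e f h : U) (coef : nat -> nat -> nat -> C) (u : U) : Prop :=
  exists n : nat,
    (forall a b c, [|| (n <= a)%N, (n <= b)%N | (n <= c)%N] -> coef a b c = 0) /\
    u = \sum_(a < n) \sum_(b < n) \sum_(c < n) coef a b c *: pbw_mono e f h a b c.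

Definition PBW_basis (e f h : U) : Prop :=
  forall u, (exists coef, pbw_rep e f h coef u) /\
    forall c1 c2, pbw_rep e f h c1 u -> pbw_rep e f h c2 u ->
      forall a b c, c1 a b c = c2 a b c.

Definition is_U_sl2 (e f h : U) : Prop := sl2_relations e f h /\ PBW_basis e f h.

Definition is_transpose (e f h : U) (T : U -> U) : Prop :=
  [/\ forall (a : C) x y, T (a *: x + y) = a *: T x + T y,
      forall x y, T (x * y) = T y * T x,
      T 1 = 1 &
      [/\ T e = - e, T f = - f & T h = - h]].

Definition sl2_gen (e f h : U) (i : 'I_3) : U :=
  if val i == 0%N then e else if val i == 1%N then f else h.

Definition adw (w : seq U) (u : U) : U := foldr lie u w.

(* R = ad(U(g)) Q : span of all iterated adjoint actions of e, f, h on Q *)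
Definition ad_span (e f h : U) (Q : U) (u : U) : Prop :=
  exists s : seq (C * seq 'I_3),
    u = \sum_(p <- s) p.1 *: adw (map (sl2_gen e f h) p.2) Q.

Definition zero_weight (h u : U) : Prop := lie h u = 0.

Definition ad_stable (e f h : U) (S : U -> Prop) : Prop :=
  [/\ S 0, forall (a : C) x y, S x -> S y -> S (a *: x + y) &
      forall x, S x -> [/\ S (lie e x), S (lie f x) & S (lie h x)]].

(* R (an ad-submodule of U) is irreducible and isomorphic to V(n omega) *)
Definition ad_iso_V (e f h : U) (R : U -> Prop) (n : nat) : Prop :=
  [/\ exists x, R x /\ x != 0,
      forall S, ad_stable e f h S -> (forall x, S x -> R x) ->
        (forall x, S x -> x = 0) \/ (forall x, R x -> S x) &
      exists w, [/\ R w, w != 0, lie e w = 0 & lie h w = n%:R *: w]].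

Definition peval (p : {poly C}) (x : U) : U := \sum_(i < size p) p`_i *: x ^+ i.

Definition is_Umodule (M : lmodType C) (act : U -> M -> M) : Prop :=
  [/\ forall x (a : C) v w, act x (a *: v + w) = a *: act x v + act x w,
      forall (a : C) x y v, act (a *: x + y) v = a *: act x v + act y v,
      forall v, act 1 v = v &
      forall x y v, act (x * y) v = act x (act y v)].

Definition is_submodule (M : lmodType C) (act : U -> M -> M) (S : M -> Prop) : Prop :=
  [/\ S 0, forall (a : C) v w, S v -> S w -> S (a *: v + w) &
      forall x v, S v -> S (act x v)].

Definition irreducible_module (M : lmodType C) (act : U -> M -> M) : Prop :=
  (exists v : M, v != 0) /\
  forall S, is_submodule act S -> (forall v, S v -> v = 0) \/ (forall v, S v).

Definition hw_vector (e h : U) (M : lmodType C) (act : U -> M -> M) (v : M) (m : C) : Prop :=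
  [/\ v != 0, act e v = 0 & act h v = m *: v].

(* the irreducible highest weight module V(mu), mu(h) = m, is annihilated by Q,
   i.e. (by A(L(k,0)) = U(g)/<Q>) it is an A(L(k,0))-module *)
Definition Vmu_annihilated_by (e h : U) (Q : U) (m : C) : Prop :=
  forall (M : lmodType C) (act : U -> M -> M),
    is_Umodule act -> irreducible_module act ->
    (exists v, hw_vector e h act v m) ->
    forall v, act Q v = 0.

End Sl2.

(* admissible level k = p/q *)
Definition admissible (p : int) (q : nat) : bool :=
  [&& (0 < q)%N, coprimez p q%:Z & (0 <= 2 * q%:Z + p - 2)%R].

Definition admN (p : int) (q : nat) : nat := `|(2 * q%:Z + p - 1)%R|%N.

(* Main.v *)
Require Import Defs.
From HB Require Import structures.
From mathcomp Require Import all_boot all_order all_algebra.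
From Stdlib Require Import ClassicalEpsilon Classical.
From mathcomp Require Import ring zify.
Import Order.TTheory GRing.Theory Num.Theory.
Local Open Scope ring_scope.

Module P1.
Set Implicit Arguments. Unset Strict Implicit. Unset Printing Implicit Defensive.

Section RingFacts.
Variables (C : numClosedFieldType) (U : algType C).
Implicit Types x y z : U.

Lemma lieE x y : x * y = y * x + lie x y.
Proof. by rewrite /lie addrC subrK. Qed.

Lemma lieM x y z : lie x (y * z) = lie x y * z + y * lie x z.
Proof. by rewrite /lie mulrBl mulrBr !mulrA addrA subrK. Qed.

Lemma lieD x y z : lie x (y + z) = lie x y + lie x z.
Proof. by rewrite /lie mulrDr mulrDl opprD addrACA. Qed.

Lemma lieN x y : lie x (- y) = - lie x y.
Proof. by rewrite /lie mulrN mulNr opprK opprB addrC. Qed.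

Lemma lieB x y z : lie x (y - z) = lie x y - lie x z.
Proof. by rewrite lieD lieN. Qed.

Lemma lieZ x (a : C) y : lie x (a *: y) = a *: lie x y.
Proof. by rewrite /lie -scalerAr -scalerAl scalerBr. Qed.

Lemma lieL x (a : C) y z : lie x (a *: y + z) = a *: lie x y + lie x z.
Proof. by rewrite lieD lieZ. Qed.

Lemma lie0 x : lie x 0 = 0.
Proof. by rewrite /lie mulr0 mul0r subrr. Qed.

Lemma lieDl x y z : lie (x + y) z = lie x z + lie y z.
Proof. by rewrite /lie mulrDr mulrDl opprD addrACA. Qed.

Lemma lieZl (a : C) x y : lie (a *: x) y = a *: lie x y.
Proof. by rewrite /lie -scalerAr -scalerAl scalerBr. Qed.

Lemma lie_anti x y : lie x y = - lie y x.
Proof. by rewrite /lie opprB. Qed.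

Lemma jacobi x y z : lie x (lie y z) = lie (lie x y) z + lie y (lie x z).
Proof.
rewrite [lie y z]/lie lieB !lieM; set A := lie x y; set D := lie x z.
rewrite [lie A z]/lie [lie y D]/lie.
by rewrite opprD [- (D * y) - _]addrC addrACA.
Qed.
Lemma lie1 x : lie x 1 = 0.
Proof. by rewrite /lie mulr1 mul1r subrr. Qed.

Lemma comb2 (V : lmodType C) (X Y : V) a1 b1 a2 b2 :
  a1 *: X + b1 *: Y + (a2 *: X + b2 *: Y) = (a1 + a2) *: X + (b1 + b2) *: Y.
Proof. by rewrite addrACA -!scalerDl. Qed.

End RingFacts.

Section Sl2U.
Variables (C : numClosedFieldType) (U : algType C) (e f h : U).
Hypothesis Hrel : sl2_relations e f h.

Lemma lhe : lie h e = 2%:R *: e. Proof. by case: Hrel => -> _ _; rewrite scaler_nat. Qed.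
Lemma lhf : lie h f = - 2%:R *: f. Proof. by case: Hrel => _ -> _; rewrite scaleNr scaler_nat. Qed.
Lemma lef : lie e f = h. Proof. by case: Hrel. Qed.

Lemma lie_h_fpow a : lie h (f ^+ a) = (- (a%:R * 2)) *: f ^+ a.
Proof.
elim: a => [|a IH]; first by rewrite expr0 lie1 mul0r oppr0 scale0r.
rewrite exprS lieM IH lhf -scalerAl -scalerAr -scalerDl; congr (_ *: _); ring.
Qed.

Lemma lie_e_fpow a :
  lie e (f ^+ a.+1) = a.+1%:R *: (f ^+ a * h) + (- (a.+1 * a)%:R) *: f ^+ a.
Proof.
elim: a => [|a IH].
  by rewrite expr1 expr0 mul1r lef scale1r muln0 oppr0 scale0r addr0.
rewrite exprS lieM IH lef (lieE h) lie_h_fpow [f * _]mulrDr -!scalerAr !mulrA -exprS.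
rewrite -[X in X + _ + _]scale1r comb2; congr (_ *: _ + _ *: _); ring.
Qed.

End Sl2U.


End P1.
Import P1.

Module P2.
Set Implicit Arguments. Unset Strict Implicit. Unset Printing Implicit Defensive.

Definition S3 (V : zmodType) (n : nat) (g : nat -> nat -> nat -> V) : V :=
  \sum_(a < n) \sum_(b < n) \sum_(c < n) g a b c.

Lemma sum_ext (V : zmodType) n n' (G : nat -> V) :
  (forall i, (n <= i)%N -> G i = 0) -> (n <= n')%N ->
  \sum_(i < n) G i = \sum_(i < n') G i.
Proof.
move=> HG Hn; rewrite -(subnKC Hn) big_split_ord /= [X in _ + X]big1 ?addr0 //.
by move=> i _; apply: HG; rewrite leq_addr.
Qed.

Lemma S3_ext (V : zmodType) n n' (g : nat -> nat -> nat -> V) :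
  (forall a b c, [|| (n <= a)%N, (n <= b)%N | (n <= c)%N] -> g a b c = 0) ->
  (n <= n')%N -> S3 n g = S3 n' g.
Proof.
move=> Hg Hn; rewrite /S3.
transitivity (\sum_(a < n') \sum_(b < n) \sum_(c < n) g a b c).
  apply: (@sum_ext _ n n' (fun a => \sum_(b < n) \sum_(c < n) g a b c)) => // a Ha.
  by apply: big1 => b _; apply: big1 => c _; apply: Hg; rewrite Ha.
apply: eq_bigr => a _.
transitivity (\sum_(b < n') \sum_(c < n) g a b c).
  apply: (@sum_ext _ n n' (fun b => \sum_(c < n) g a b c)) => // b Hb.
  by apply: big1 => c _; apply: Hg; rewrite Hb orbT.
apply: eq_bigr => b _.
apply: (@sum_ext _ n n' (fun c => g a b c)) => // c Hc.
by apply: Hg; rewrite Hc !orbT.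
Qed.

Lemma S3_lin (C : numClosedFieldType) (V : lmodType C) n (g1 g2 : nat -> nat -> nat -> V) (al : C) :
  S3 n (fun a b c => al *: g1 a b c + g2 a b c) = al *: S3 n g1 + S3 n g2.
Proof.
rewrite /S3 scaler_sumr -big_split; apply: eq_bigr => a _.
rewrite scaler_sumr -big_split; apply: eq_bigr => b _.
by rewrite scaler_sumr -big_split.
Qed.

Lemma S3_delta (V : zmodType) n (g : nat -> nat -> nat -> V) a b c :
  (a < n)%N -> (b < n)%N -> (c < n)%N ->
  S3 n (fun a' b' c' => if (a' == a) && (b' == b) && (c' == c) then g a' b' c' else 0)
  = g a b c.
Proof.
move=> Ha Hb Hc; rewrite /S3 (bigD1 (Ordinal Ha)) //= [X in _ + X]big1 ?addr0.
  rewrite (bigD1 (Ordinal Hb)) //= [X in _ + X]big1 ?addr0.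
    rewrite (bigD1 (Ordinal Hc)) //= [X in _ + X]big1 ?addr0 ?eqxx //.
    by move=> k /negPf Hk; rewrite -val_eqE /= in Hk; rewrite Hk !andbF.
  move=> j /negPf Hj; rewrite -val_eqE /= in Hj; apply: big1 => k _.
  by rewrite Hj andbF.
move=> i /negPf Hi; rewrite -val_eqE /= in Hi; apply: big1 => j _; apply: big1 => k _.
by rewrite Hi.
Qed.

Section Lin.
Variables (C : numClosedFieldType) (M : lmodType C).
Definition linf (G : M -> M) := forall (a : C) x y, G (a *: x + y) = a *: G x + G y.

Lemma linf0 G : linf G -> G 0 = 0.
Proof. move=> HG; have := HG 1 0 0; rewrite !scale1r addr0 => H0. by apply: (@addrI _ (G 0)); rewrite addr0 -H0. Qed.
Lemma linfD G : linf G -> forall x y, G (x + y) = G x + G y.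
Proof. by move=> HG x y; have := HG 1 x y; rewrite !scale1r. Qed.
Lemma linfZ G : linf G -> forall a x, G (a *: x) = a *: G x.
Proof. by move=> HG a x; have := HG a x 0; rewrite !addr0 linf0 // addr0. Qed.
Lemma linfN G : linf G -> forall x, G (- x) = - G x.
Proof. by move=> HG x; rewrite -scaleN1r linfZ // scaleN1r. Qed.
Lemma linf_iter G n : linf G -> linf (iter n G).
Proof.
move=> HG; elim: n => [|n IH] a x y //=.
by rewrite IH HG.
Qed.
Lemma linf_sum G (I : Type) (r : seq I) (P : pred I) (g : I -> M) : linf G ->
  G (\sum_(i <- r | P i) g i) = \sum_(i <- r | P i) G (g i).
Proof.
move=> HG; elim: r => [|x r IH]; first by rewrite !big_nil linf0.
by rewrite !big_cons; case: (P x); rewrite ?linfD ?IH.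
Qed.
Lemma linf_S3 G n g : linf G -> G (S3 n g) = S3 n (fun a b c => G (g a b c)).
Proof.
move=> HG; rewrite /S3 linf_sum //; apply: eq_bigr => a _.
rewrite linf_sum //; apply: eq_bigr => b _; exact: linf_sum.
Qed.
End Lin.

End P2.
Import P2.

Module P3.
Set Implicit Arguments. Unset Strict Implicit. Unset Printing Implicit Defensive.

Section Mono.
Variables (C : numClosedFieldType) (U : algType C) (e f h : U).
Hypothesis Hrel : sl2_relations e f h.
Local Notation mono := (pbw_mono e f h).

Lemma f_mono a b c : f * mono a b c = mono a.+1 b c.
Proof. by rewrite /pbw_mono !mulrA exprS. Qed.

Lemma h_mono a b c : h * mono a b c = mono a b.+1 c + (- (a%:R * 2)) *: mono a b c.
Proof.
rewrite /pbw_mono !mulrA (lieE h (f ^+ a)) (lie_h_fpow Hrel) mulrDl -scalerAl.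
by rewrite !mulrDl -!scalerAl -(mulrA _ h) -exprS.
Qed.

Definition Zt a b c := f ^+ a * e * h ^+ b * e ^+ c.

Lemma Zt0 a c : Zt a 0 c = mono a 0 c.+1.
Proof. by rewrite /Zt /pbw_mono !expr0 !mulr1 exprS mulrA. Qed.

Lemma ZtS a b c : Zt a b.+1 c = h * Zt a b c + (a%:R * 2 - 2) *: Zt a b c.
Proof.
have eh : e * h = h * e + (- 2%:R) *: e.
  by rewrite (lieE e h) lie_anti (lhe Hrel) scaleNr.
have fh : f ^+ a * h = h * f ^+ a + (a%:R * 2) *: f ^+ a.
  by rewrite (lieE (f ^+ a) h) lie_anti (lie_h_fpow Hrel) scaleNr opprK.
rewrite /Zt exprS !mulrA -(mulrA _ e h) eh mulrDr mulrA fh -scalerAr.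
rewrite !mulrDl -!scalerAl -addrA -scalerDl.
by congr (_ + _ *: _); ring.
Qed.

Lemma e_mono0 b c : e * mono 0 b c = Zt 0 b c.
Proof. by rewrite /pbw_mono /Zt !expr0 !mul1r !mulrA. Qed.

Lemma e_monoS a b c : e * mono a.+1 b c =
  Zt a.+1 b c + (a.+1%:R *: mono a b.+1 c + (- (a.+1 * a)%:R) *: mono a b c).
Proof.
rewrite /pbw_mono /Zt !mulrA (lieE e (f ^+ a.+1)) (lie_e_fpow Hrel).
by rewrite !mulrDl -!scalerAl -(mulrA _ h) -exprS.
Qed.
End Mono.

End P3.
Import P3.

Module P4.
Set Implicit Arguments. Unset Strict Implicit. Unset Printing Implicit Defensive.

Section PBW.
Variables (C : numClosedFieldType) (U : algType C) (e f h : U).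
Hypothesis Hpbw : PBW_basis e f h.
Local Notation mono := (pbw_mono e f h).

Lemma pbw_ind (P : U -> Prop) :
  (forall (a : C) x y, P x -> P y -> P (a *: x + y)) ->
  (forall a b c, P (mono a b c)) -> forall x, P x.
Proof.
move=> Hl Hm.
have P0 : P 0 by have := Hl (-1) _ _ (Hm 0 0 0)%N (Hm 0 0 0)%N; rewrite scaleN1r addNr.
have PD : forall x y, P x -> P y -> P (x + y).
  by move=> x y Px Py; have := Hl 1 _ _ Px Py; rewrite scale1r.
move=> x; have [[coef [n [_ ->]]] _] := Hpbw x.
apply: (big_ind P) => // i _; apply: (big_ind P) => // j _; apply: (big_ind P) => // k _.
by have := Hl (coef i j k) _ _ (Hm i j k) P0; rewrite addr0.
Qed.

Definition vanish n (coef : nat -> nat -> nat -> C) :=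
  forall a b c, [|| (n <= a)%N, (n <= b)%N | (n <= c)%N] -> coef a b c = 0.

Definition repok (u : U) (p : (nat -> nat -> nat -> C) * nat) :=
  vanish p.2 p.1 /\ u = S3 p.2 (fun a b c => p.1 a b c *: mono a b c).

Definition rp (u : U) := epsilon (inhabits ((fun _ _ _ => 0 : C), 0%N)) (repok u).

Lemma rpP u : repok u (rp u).
Proof.
apply: epsilon_spec; have [[coef [n [H1 H2]]] _] := Hpbw u.
by exists (coef, n).
Qed.

Lemma rep_widen u cf n n' : repok u (cf, n) -> (n <= n')%N -> repok u (cf, n').
Proof.
move=> [/= Hv Hu] Hn; split => /=.
  move=> a b c Habc; apply: Hv.
  by case/or3P: Habc => H; rewrite (leq_trans Hn H) ?orbT.
rewrite Hu; apply: S3_ext => // a b c Habc; by rewrite Hv // scale0r.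
Qed.

Lemma rep_uniq u c1 n1 c2 n2 : repok u (c1, n1) -> repok u (c2, n2) ->
  forall a b c, c1 a b c = c2 a b c.
Proof.
move=> [H1 H1'] [H2 H2']; apply: (Hpbw u).2.
  by exists n1.
by exists n2.
Qed.

Lemma repok_lin (al : C) x y cx cy n :
  repok x (cx, n) -> repok y (cy, n) ->
  repok (al *: x + y) ((fun a b c => al * cx a b c + cy a b c), n).
Proof.
move=> [/= Hx Ex] [/= Hy Ey]; split => /=.
  by move=> a b c H; rewrite Hx // Hy // mulr0 addr0.
rewrite Ex Ey -S3_lin /S3; apply: eq_bigr => a _; apply: eq_bigr => b _.
by apply: eq_bigr => c _; rewrite scalerDl scalerA.
Qed.

Lemma rep_mono a b c :
  repok (mono a b c)
    ((fun a' b' c' => if (a' == a) && (b' == b) && (c' == c) then 1 else 0),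
     (maxn a (maxn b c)).+1).
Proof.
split => /=.
  move=> a' b' c' H.
  case: ifP => // /andP [/andP [/eqP Ha /eqP Hb] /eqP Hc].
  by move: H; rewrite Ha Hb Hc !ltnNge !leq_max !leqnn !orbT.
rewrite -(@S3_delta _ (maxn a (maxn b c)).+1 (fun a b c => mono a b c) a b c); first last.
- by rewrite ltnS !leq_max leqnn ?orbT.
- by rewrite ltnS !leq_max leqnn ?orbT.
- by rewrite ltnS !leq_max leqnn ?orbT.
rewrite /S3; apply: eq_bigr => a' _; apply: eq_bigr => b' _; apply: eq_bigr => c' _.
by case: ifP; rewrite ?scale1r ?scale0r.
Qed.

End PBW.

End P4.
Import P4.

Module P5.
Set Implicit Arguments. Unset Strict Implicit. Unset Printing Implicit Defensive.

Section Construct.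
Variables (C : numClosedFieldType) (U : algType C) (e f h : U).
Hypothesis Hrel : sl2_relations e f h.
Hypothesis Hpbw : PBW_basis e f h.
Local Notation mono := (pbw_mono e f h).
Variables (M : lmodType C) (E F H : M -> M).
Hypotheses (linE : linf E) (linF : linf F) (linH : linf H).
Hypothesis rHF : forall x, H (F x) = F (H x) + (- 2%:R) *: F x.
Hypothesis rHE : forall x, H (E x) = E (H x) + 2%:R *: E x.
Hypothesis rEF : forall x, E (F x) = F (E x) + H x.

Lemma opHF a x : H (iter a F x) = iter a F (H x) + (- (a%:R * 2)) *: iter a F x.
Proof.
elim: a => [|a IH] /=; first by rewrite mul0r oppr0 scale0r addr0.
rewrite rHF IH (linfD linF) (linfZ linF) -addrA -scalerDl; congr (_ + _ *: _); ring.
Qed.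

Lemma opFH a x : iter a F (H x) = H (iter a F x) + (a%:R * 2) *: iter a F x.
Proof. by rewrite opHF scaleNr addrNK. Qed.

Lemma opEF a x : E (iter a.+1 F x) =
  a.+1%:R *: iter a F (H x) + (- (a.+1 * a)%:R) *: iter a F x + iter a.+1 F (E x).
Proof.
elim: a => [|a IH]; first by rewrite /= rEF scale1r muln0 oppr0 scale0r addr0 addrC.
rewrite [iter a.+2 F x]/= rEF IH !(linfD linF) !(linfZ linF).
rewrite -/(iter a.+1 F (H x)) -/(iter a.+1 F x) -/(iter a.+2 F (E x)).
set X := iter a.+1 F (H x); set Y := iter a.+1 F x; set Z := iter a.+2 F (E x).
rewrite (opHF a.+1 x) -/X -/Y.
rewrite -addrA (addrC Z) addrA -[X in _ + (X + _)]scale1r comb2.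
by congr (_ *: _ + _ *: _ + _); ring.
Qed.

Definition opm a b c x := iter a F (iter b H (iter c E x)).

Lemma linf_opm a b c : linf (opm a b c).
Proof. by move=> al x y; rewrite /opm (linf_iter c linE) (linf_iter b linH) (linf_iter a linF). Qed.

Definition act (u : U) (m : M) : M :=
  S3 (rp e f h u).2 (fun a b c => (rp e f h u).1 a b c *: opm a b c m).

Lemma act_rep u cf n : repok e f h u (cf, n) ->
  forall m, act u m = S3 n (fun a b c => cf a b c *: opm a b c m).
Proof.
move=> Hr m; rewrite /act; case E0: (rp e f h u) => [c0 n0] /=.
have Hp := rpP Hpbw u; rewrite E0 in Hp.
have Hv0 : vanish n0 c0 := Hp.1; have Hv : vanish n cf := Hr.1.
rewrite (@S3_ext _ n0 (maxn n0 n)); [|by move=> a b c Habc; rewrite Hv0 // scale0r|by rewrite leq_maxl].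
rewrite [RHS](@S3_ext _ n (maxn n0 n)); [|by move=> a b c Habc; rewrite Hv // scale0r|by rewrite leq_maxr].
rewrite /S3; apply: eq_bigr => a _; apply: eq_bigr => b _; apply: eq_bigr => c _.
by rewrite (rep_uniq Hpbw Hp Hr).
Qed.

Lemma act_lin1 (al : C) x y m : act (al *: x + y) m = al *: act x m + act y m.
Proof.
case Ex: (rp e f h x) => [cx nx]; case Ey: (rp e f h y) => [cy ny].
have Hx := rpP Hpbw x; rewrite Ex in Hx.
have Hy := rpP Hpbw y; rewrite Ey in Hy.
have Hx' := rep_widen Hx (leq_maxl nx ny); have Hy' := rep_widen Hy (leq_maxr nx ny).
rewrite (act_rep (repok_lin al Hx' Hy')) (act_rep Hx') (act_rep Hy') -S3_lin.
rewrite /S3; apply: eq_bigr => a _; apply: eq_bigr => b _; apply: eq_bigr => c _.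
by rewrite scalerDl scalerA.
Qed.

Lemma act_lin2 u (al : C) x y : act u (al *: x + y) = al *: act u x + act u y.
Proof.
rewrite /act -S3_lin /S3; apply: eq_bigr => a _; apply: eq_bigr => b _; apply: eq_bigr => c _.
by rewrite linf_opm scalerDr !scalerA mulrC.
Qed.

Lemma act_mono a b c m : act (mono a b c) m = opm a b c m.
Proof.
rewrite (act_rep (rep_mono e f h a b c)).
rewrite -(@S3_delta _ (maxn a (maxn b c)).+1 (fun a b c => opm a b c m) a b c); first last.
- by rewrite ltnS !leq_max leqnn ?orbT.
- by rewrite ltnS !leq_max leqnn ?orbT.
- by rewrite ltnS !leq_max leqnn ?orbT.
rewrite /S3; apply: eq_bigr => a' _; apply: eq_bigr => b' _; apply: eq_bigr => c' _.
by case: ifP; rewrite ?scale1r ?scale0r.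
Qed.

Lemma act0 m : act 0 m = 0.
Proof.
have := act_lin1 1 0 0 m; rewrite !scale1r addr0 => H0.
by apply: (@addrI _ (act 0 m)); rewrite addr0 -H0.
Qed.

Lemma actD x y m : act (x + y) m = act x m + act y m.
Proof. by have := act_lin1 1 x y m; rewrite !scale1r. Qed.

Lemma actZ (al : C) x m : act (al *: x) m = al *: act x m.
Proof. by have := act_lin1 al x 0 m; rewrite !addr0 act0 addr0. Qed.

Lemma act_f y m : act (f * y) m = F (act y m).
Proof.
move: y m; apply: (pbw_ind Hpbw) => [al x y IHx IHy | a b c] m.
  by rewrite mulrDr -scalerAr !act_lin1 IHx IHy linF.
by rewrite f_mono act_mono act_mono.
Qed.

Lemma act_h y m : act (h * y) m = H (act y m).
Proof.
move: y m; apply: (pbw_ind Hpbw) => [al x y IHx IHy | a b c] m.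
  by rewrite mulrDr -scalerAr !act_lin1 IHx IHy linH.
by rewrite (h_mono Hrel) actD actZ !act_mono /opm opHF.
Qed.

Lemma act_Zt a b c m : act (Zt e f h a b c) m = iter a F (E (iter b H (iter c E m))).
Proof.
elim: b => [|b IH]; first by rewrite Zt0 act_mono.
rewrite ZtS // actD actZ act_h IH /=.
set y := iter b H (iter c E m).
have EH : E (H y) = H (E y) + (- 2%:R) *: E y by rewrite rHE scaleNr addrK.
rewrite EH (linfD (linf_iter a linF)) (linfZ (linf_iter a linF)) opFH -addrA -scalerDl.
by congr (_ + _ *: _); ring.
Qed.

Lemma act_e y m : act (e * y) m = E (act y m).
Proof.
move: y m; apply: (pbw_ind Hpbw) => [al x y IHx IHy | a b c] m.
  by rewrite mulrDr -scalerAr !act_lin1 IHx IHy linE.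
case: a => [|a].
  by rewrite e_mono0 act_Zt act_mono.
rewrite (e_monoS Hrel) !actD !actZ act_Zt !act_mono /opm (opEF a (iter b H (iter c E m))) /=.
by rewrite addrC.
Qed.

Lemma act_fpow a z m : act (f ^+ a * z) m = iter a F (act z m).
Proof. by elim: a => [|a IH]; rewrite ?expr0 ?mul1r // exprS -mulrA act_f IH. Qed.
Lemma act_hpow a z m : act (h ^+ a * z) m = iter a H (act z m).
Proof. by elim: a => [|a IH]; rewrite ?expr0 ?mul1r // exprS -mulrA act_h IH. Qed.
Lemma act_epow a z m : act (e ^+ a * z) m = iter a E (act z m).
Proof. by elim: a => [|a IH]; rewrite ?expr0 ?mul1r // exprS -mulrA act_e IH. Qed.

Lemma act1 m : act 1 m = m.
Proof.
have -> : (1 : U) = mono 0 0 0 by rewrite /pbw_mono !expr0 !mulr1.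
by rewrite act_mono.
Qed.

Lemma act_mul x y m : act (x * y) m = act x (act y m).
Proof.
move: x y m; apply: (pbw_ind Hpbw) => [al x1 x2 IH1 IH2 | a b c] y m.
  by rewrite mulrDl -scalerAl !act_lin1 IH1 IH2.
transitivity (opm a b c (act y m)); last by rewrite act_mono.
by rewrite /pbw_mono -!mulrA act_fpow act_hpow act_epow.
Qed.

Lemma construct : exists act : U -> M -> M, is_Umodule act /\
  (forall m, act e m = E m) /\ (forall m, act f m = F m) /\ (forall m, act h m = H m).
Proof.
exists act; split; first split.
- exact: act_lin2.
- exact: act_lin1.
- exact: act1.
- exact: act_mul.
split.
  have -> : e = mono 0 0 1 by rewrite /pbw_mono !expr0 !mul1r expr1.
  by move=> m; rewrite act_mono.
split.
  have -> : f = mono 1 0 0 by rewrite /pbw_mono !expr0 !mulr1 expr1.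
  by move=> m; rewrite act_mono.
have -> : h = mono 0 1 0 by rewrite /pbw_mono !expr0 mul1r mulr1 expr1.
by move=> m; rewrite act_mono.
Qed.

End Construct.

End P5.
Import P5.

Module P6.
Set Implicit Arguments. Unset Strict Implicit. Unset Printing Implicit Defensive.

Section CoefModel.
Variables (C : numClosedFieldType) (M : lmodType C) (cf : nat -> M -> C) (B : nat -> bool)
  (mu : C) (E F H : M -> M).
Hypothesis cf_lin : forall i (a : C) x y, cf i (a *: x + y) = a * cf i x + cf i y.
Hypothesis cf_ext : forall x y, (forall i, cf i x = cf i y) -> x = y.
Hypothesis cfB : forall x i, ~~ B i -> cf i x = 0.
Hypothesis cfH : forall x i, cf i (H x) = (mu - i%:R * 2) * cf i x.
Hypothesis cfE : forall x i, cf i (E x) = (i.+1%:R * (mu - i%:R)) * cf i.+1 x.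
Hypothesis cfF0 : forall x, cf 0 (F x) = 0.
Hypothesis cfFS : forall x i, cf i.+1 (F x) = if B i.+1 then cf i x else 0.
Hypothesis Bedge : forall i, B i -> ~~ B i.+1 -> mu = i%:R.

Lemma cf0 i : cf i 0 = 0.
Proof. have := cf_lin i 1 0 0; rewrite scale1r addr0 mul1r => H0.
by apply: (@addrI _ (cf i 0)); rewrite addr0 -H0. Qed.
Lemma cfD i x y : cf i (x + y) = cf i x + cf i y.
Proof. by have := cf_lin i 1 x y; rewrite scale1r mul1r. Qed.
Lemma cfN i x : cf i (- x) = - cf i x.
Proof. by have := cf_lin i (-1) x 0; rewrite addr0 scaleN1r cf0 addr0 mulN1r. Qed.
Lemma cfZ i a x : cf i (a *: x) = a * cf i x.
Proof. by have := cf_lin i a x 0; rewrite !addr0 cf0 addr0. Qed.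

Lemma linH : linf H.
Proof. by move=> a x y; apply: cf_ext => i; rewrite cfH !cf_lin !cfH; ring. Qed.
Lemma linE : linf E.
Proof. by move=> a x y; apply: cf_ext => i; rewrite cfE !cf_lin !cfE; ring. Qed.
Lemma linF : linf F.
Proof.
move=> a x y; apply: cf_ext => -[|i]; first by rewrite cf_lin !cfF0; ring.
by rewrite cf_lin !cfFS; case: (B i.+1); rewrite ?cf_lin //; ring.
Qed.

Lemma rHF x : H (F x) = F (H x) + (- 2%:R) *: F x.
Proof.
apply: cf_ext => -[|i]; rewrite cfD cfZ cfH ?cfF0; first ring.
rewrite !cfFS; case: (B i.+1); rewrite ?cfH; ring.
Qed.

Lemma rHE x : H (E x) = E (H x) + 2%:R *: E x.
Proof. by apply: cf_ext => i; rewrite cfD cfZ cfH !cfE cfH; ring. Qed.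

Lemma rEF x : E (F x) = F (E x) + H x.
Proof.
apply: cf_ext => -[|i]; rewrite cfD cfE cfH.
  rewrite cfF0 cfFS; case HB1: (B 1).
    ring.
  case HB0: (B 0); last by rewrite cfB ?HB0 //; ring.
  by rewrite (Bedge HB0) ?HB1 //; ring.
rewrite !cfFS cfE; case HB1: (B i.+1); last by rewrite (cfB x) ?HB1 //; case: (B _); ring.
case HB2: (B i.+2); first ring.
by rewrite (Bedge HB1) ?HB2 //; rewrite -natr1; ring.
Qed.


Hypothesis B0 : B 0.
Hypothesis Bdown : forall i, B i.+1 -> B i.
Variable v0 : M.
Hypothesis cfv0 : forall i, cf i v0 = (i == 0)%:R.

Lemma hwE : E v0 = 0.
Proof. by apply: cf_ext => i; rewrite cfE cfv0 cf0 mulr0. Qed.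
Lemma hwH : H v0 = mu *: v0.
Proof. by apply: cf_ext => -[|i]; rewrite cfH cfZ cfv0 /=; ring. Qed.
Lemma v0_neq0 : v0 != 0.
Proof. by apply/eqP => H0; have := cfv0 0; rewrite H0 cf0 /= => /eqP; rewrite eq_sym pnatr_eq0. Qed.

Lemma cfEiter x t i :
  cf i (iter t E x) = (\prod_(j < t) ((i + j).+1%:R * (mu - (i + j)%:R))) * cf (i + t) x.
Proof.
elim: t i => [|t IH] i; first by rewrite big_ord0 mul1r addn0.
rewrite /= cfE IH big_ord_recl /= addn0 addSnnS mulrA; congr (_ * _ * _).
by apply: eq_bigr => j _; rewrite /bump /= add1n addSnnS.
Qed.

Lemma cfFiter i j : cf j (iter i F v0) = if (j == i) && B i then 1 else 0.
Proof.
elim: i j => [|i IH] j; first by rewrite /= cfv0 B0 andbT; case: (j == 0)%N; rewrite /= ?mulr1n.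
case: j => [|j]; first by rewrite /= cfF0.
rewrite /= cfFS IH eqSS; case: (eqVneq j i) => [->|_] /=; last by case: (B _).
by case HB: (B i.+1) => //; rewrite (Bdown HB).
Qed.

Hypothesis Bnz : forall j, B j.+1 -> mu != j%:R.
Hypothesis fin : forall x, exists d, forall i, (d <= i)%N -> cf i x = 0.

Lemma Bdown_le i j : (i <= j)%N -> B j -> B i.
Proof.
move=> Hij; rewrite -(subnK Hij); elim: (j - i)%N => [|k IH] //.
by rewrite addSn => /Bdown.
Qed.

Lemma irr_gen (S : M -> Prop) :
  (forall (a : C) u w, S u -> S w -> S (a *: u + w)) ->
  (forall u, S u -> S (E u)) -> (forall u, S u -> S (F u)) ->
  forall x, S x -> x != 0 -> forall z, S z.
Proof.
move=> Sl SE SF x Sx xn0.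
have S0 : S 0 by have := Sl (-1) _ _ Sx Sx; rewrite scaleN1r addNr.
have SZ : forall a u, S u -> S (a *: u) by move=> a u Su; have := Sl a _ _ Su S0; rewrite addr0.
have SD : forall u w, S u -> S w -> S (u + w) by move=> u w Su Sw; have := Sl 1 _ _ Su Sw; rewrite scale1r.
have [D HD] := fin x.
have [i Hi] : exists i, cf i x != 0.
  apply: Classical_Prop.NNPP => Hn; move/eqP: xn0; apply; apply: cf_ext => i; rewrite cf0.
  by case: (eqVneq (cf i x) 0) => // Hi; exfalso; apply: Hn; exists i.
have ub : forall i, cf i x != 0 -> (i <= D)%N.
  move=> j Hj; case: (leqP D j) => [HDj|/ltnW //]; by rewrite HD ?eqxx in Hj.
case: (ex_maxnP (ex_intro (fun i => cf i x != 0) i Hi) ub) => d Pd maxd.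
have Sit : forall t u, S u -> S (iter t E u) by elim=> [|t IH] u Su //=; apply: SE; apply: IH.
set y := iter d E x.
have Sy : S y by apply: Sit.
have Bd : B d by apply: contraR Pd => /cfB ->; rewrite eqxx.
have y0 : cf 0 y != 0.
  rewrite /y cfEiter add0n mulf_neq0 //; apply/prodf_neq0 => j _.
  rewrite add0n mulf_neq0 ?pnatr_eq0 // subr_eq0; apply: Bnz.
  by apply: (Bdown_le _ Bd).
have yS : forall i, cf i.+1 y = 0.
  move=> j; rewrite /y cfEiter; case: (eqVneq (cf (j.+1 + d) x) 0) => [-> |Hj]; first by rewrite mulr0.
  by have := maxd _ Hj; rewrite addSn ltnNge leq_addl.
have Sv0 : S v0.
  suff -> : v0 = (cf 0 y)^-1 *: y by apply: SZ.
  apply: cf_ext => -[|j]; rewrite cfZ cfv0 /=; first by rewrite mulVf.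
  by rewrite yS mulr0.
have Sb : forall t, S (iter t F v0) by elim=> [|t IH] //=; apply: SF.
move=> z; have [Dz HDz] := fin z; elim: Dz z HDz => [|n IH] z Hz.
  suff -> : z = 0 by [].
  by apply: cf_ext => j; rewrite cf0 Hz.
have -> : z = (z - cf n z *: iter n F v0) + cf n z *: iter n F v0 by rewrite subrK.
apply: SD; last by apply: SZ.
apply: IH => j Hj; rewrite cfD cfN cfZ cfFiter.
case: (ltngtP n j) => Hnj.
- by rewrite Hz // mulr0 subr0.
- by move: Hj; rewrite leqNgt Hnj.
- rewrite -Hnj; case HB: (B n); first by rewrite mulr1 subrr.
  by rewrite (cfB _ (negbT HB)) mulr0 subr0.
Qed.

End CoefModel.

End P6.
Import P6.

Module P7.
Set Implicit Arguments. Unset Strict Implicit. Unset Printing Implicit Defensive.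

Definition vH (C : numClosedFieldType) (mu : C) (p : {poly C}) : {poly C} :=
  \poly_(i < size p) ((mu - i%:R * 2) * p`_i).
Definition vE (C : numClosedFieldType) (mu : C) (p : {poly C}) : {poly C} :=
  \poly_(i < size p) ((i.+1%:R * (mu - i%:R)) * p`_i.+1).
Definition vF (C : numClosedFieldType) (p : {poly C}) : {poly C} := 'X * p.

Section VermaCoef.
Variables (C : numClosedFieldType) (mu : C).
Lemma vH_coef (p : {poly C}) i : (vH mu p)`_i = (mu - i%:R * 2) * p`_i.
Proof. by rewrite coef_poly; case: ltnP => // Hi; rewrite nth_default // mulr0. Qed.
Lemma vE_coef (p : {poly C}) i : (vE mu p)`_i = (i.+1%:R * (mu - i%:R)) * p`_i.+1.
Proof.
rewrite coef_poly; case: ltnP => // Hi.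
by rewrite nth_default ?mulr0 // (leq_trans Hi).
Qed.
Lemma vF_coef0 (p : {poly C}) : (vF p)`_0 = 0.
Proof. by rewrite /vF coefXM. Qed.
Lemma vF_coefS (p : {poly C}) i : (vF p)`_i.+1 = p`_i.
Proof. by rewrite /vF coefXM. Qed.
Lemma pcl i (a : C) (x y : {poly C}) : (a *: x + y)`_i = a * x`_i + y`_i.
Proof. by rewrite coefD coefZ. Qed.
Lemma pce (x y : {poly C}) : (forall i, x`_i = y`_i) -> x = y.
Proof. by move=> H; apply/polyP. Qed.
End VermaCoef.

Section Models.
Variables (C : numClosedFieldType) (U : algType C) (e f h : U).
Hypothesis Hrel : sl2_relations e f h.
Hypothesis Hpbw : PBW_basis e f h.

Lemma coef_irrep (M : lmodType C) (cf : nat -> M -> C) (B : nat -> bool) (mu : C)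
  (E F H : M -> M) (v0 : M) :
  (forall i (a : C) x y, cf i (a *: x + y) = a * cf i x + cf i y) ->
  (forall x y, (forall i, cf i x = cf i y) -> x = y) ->
  (forall x i, ~~ B i -> cf i x = 0) ->
  (forall x i, cf i (H x) = (mu - i%:R * 2) * cf i x) ->
  (forall x i, cf i (E x) = (i.+1%:R * (mu - i%:R)) * cf i.+1 x) ->
  (forall x, cf 0 (F x) = 0) ->
  (forall x i, cf i.+1 (F x) = if B i.+1 then cf i x else 0) ->
  (forall i, B i -> ~~ B i.+1 -> mu = i%:R) ->
  B 0 -> (forall i, B i.+1 -> B i) ->
  (forall i, cf i v0 = (i == 0)%:R) ->
  (forall j, B j.+1 -> mu != j%:R) ->
  (forall x, exists d, forall i, (d <= i)%N -> cf i x = 0) ->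
  exists act : U -> M -> M,
    is_Umodule act /\ irreducible_module act /\ hw_vector e h act v0 mu.
Proof.
move=> cl ce cB cH cE cF0 cFS Be B0 Bd cv Bnz fin.
have [act [Hm [He [Hf Hh]]]] := construct Hrel Hpbw (linE cl ce cE) (linF cl ce cF0 cFS)
  (linH cl ce cH) (rHF cl ce cH cF0 cFS) (rHE cl ce cH cE) (rEF cl ce cB cH cE cF0 cFS Be).
exists act; split => //; split.
  split; first by exists v0; exact: (v0_neq0 cl cv).
  move=> S [S0 Sl Sa]; case: (classic (forall v, S v -> v = 0)) => [|Hn]; [by left|right].
  have [x Hx] := not_all_ex_not _ _ Hn.
  have [Sx xn0] := imply_to_and _ _ Hx.
  apply: (irr_gen cl ce cB cE cF0 cFS B0 Bd cv Bnz fin (S := S)) Sx _ => //.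
  - by move=> u Su; rewrite -He; apply: Sa.
  - by move=> u Su; rewrite -Hf; apply: Sa.
  - by apply/eqP.
split; first exact: (v0_neq0 cl cv).
  by rewrite He (hwE cl ce cE cv).
by rewrite Hh (hwH cl ce cH cv).
Qed.


Lemma exists_irrep (mu : C) : exists (M : lmodType C) (act : U -> M -> M) (v : M),
  is_Umodule act /\ irreducible_module act /\ hw_vector e h act v mu.
Proof.
case: (classic (exists k : nat, mu = k%:R)) => [[k ->]|Hn].
  pose M := {poly_k.+1 C}.
  pose cf i (p : M) := (p : {poly C})`_i.
  pose fH (p : M) : M := npolyp k.+1 (vH (k%:R : C) p).
  pose fE (p : M) : M := npolyp k.+1 (vE (k%:R : C) p).
  pose fF (p : M) : M := npolyp k.+1 (vF p).
  have pk : forall (p : M) i, (k < i)%N -> (p : {poly C})`_i = 0.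
    by move=> p i Hi; rewrite big_coef_npoly.
  have h1 : forall i (a : C) (x y : M), cf i (a *: x + y) = a * cf i x + cf i y.
    move=> i a x y; rewrite /cf /=; exact: pcl.
  have h2 : forall x y : M, (forall i, cf i x = cf i y) -> x = y.
    by move=> x y Hxy; apply/npolyP => i; apply: Hxy.
  have h3 : forall x i, ~~ (i <= k)%N -> cf i x = 0.
    by move=> x i; rewrite -ltnNge => Hi; apply: pk.
  have h4 : forall x i, cf i (fH x) = (k%:R - i%:R * 2) * cf i x.
    move=> x i; rewrite /cf coef_npolyp vH_coef; case: ltnP => // Hi.
    by rewrite pk ?mulr0.
  have h5 : forall x i, cf i (fE x) = (i.+1%:R * (k%:R - i%:R)) * cf i.+1 x.
    move=> x i; rewrite /cf coef_npolyp vE_coef; case: ltnP => // Hi.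
    by rewrite pk ?mulr0 // ltnW.
  have h6 : forall x, cf 0 (fF x) = 0.
    by move=> x; rewrite /cf coef_npolyp vF_coef0.
  have h7 : forall x i, cf i.+1 (fF x) = if (i.+1 <= k)%N then cf i x else 0.
    by move=> x i; rewrite /cf coef_npolyp vF_coefS ltnS.
  have h8 : forall i, (i <= k)%N -> ~~ (i.+1 <= k)%N -> (k%:R : C) = i%:R.
    by move=> i Hi Hi1; congr (_%:R); apply/eqP; rewrite eqn_leq Hi andbT leqNgt.
  have h9 : forall i, (i.+1 <= k)%N -> (i <= k)%N by move=> i /ltnW.
  have h10 : forall i, cf i (npolyp k.+1 1) = (i == 0)%:R.
    move=> i; rewrite /cf coef_npolyp coef1; case: ltnP => // Hi.
    by case: i Hi.
  have h11 : forall j, (j.+1 <= k)%N -> (k%:R : C) != j%:R.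
    by move=> j Hj; rewrite eqr_nat neq_ltn Hj orbT.
  have h12 : forall x, exists d, forall i, (d <= i)%N -> cf i x = 0.
    by move=> x; exists k.+1 => i Hi; apply: pk.
  have [act Hact] := coef_irrep h1 h2 h3 h4 h5 h6 h7 h8 (leq0n k) h9 h10 h11 h12.
  by exists M, act, (npolyp k.+1 1).
pose M := {poly C}.
have [act Hact] := @coef_irrep M (fun i p => p`_i) (fun _ => true) mu (vE mu) (@vF C) (vH mu) 1
  (@pcl C) (@pce C) (fun _ _ H => False_ind _ (notF H)) (vH_coef mu) (vE_coef mu) (@vF_coef0 C) (@vF_coefS C)
  (fun _ _ H => False_ind _ (notF H)) isT (fun _ _ => isT) (fun i => coef1 _ i)
  (fun j _ => introN eqP (fun Hj => Hn (ex_intro _ j Hj)))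
  (fun x => ex_intro (fun d => forall i, (d <= i)%N -> x`_i = 0) (size x) (fun i Hi => nth_default 0 Hi)).
by exists M, act, 1.
Qed.


Lemma exists_lowest (lam : C) : exists (M : lmodType C) (act : U -> M -> M) (w : M) (c0 : M -> C),
  [/\ is_Umodule act, act f w = 0, act h w = lam *: w, c0 w = 1 &
     (forall z, c0 (act e z) = 0) /\ (forall (a : C) x y, c0 (a *: x + y) = a * c0 x + c0 y)].
Proof.
pose mu := - lam.
have cl := @pcl C; have ce := @pce C.
have cB : forall (x : {poly C}) i, ~~ (fun _ : nat => true) i -> x`_i = 0 by [].
have cH := vH_coef mu; have cE := vE_coef mu; have cF0 := @vF_coef0 C.
have cFS : forall (p : {poly C}) i, (vF p)`_i.+1 = if (fun _ : nat => true) i.+1 then p`_i else 0 := @vF_coefS C.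
have Be : forall i, (fun _ : nat => true) i -> ~~ (fun _ : nat => true) i.+1 -> mu = i%:R by [].
have lE := linE cl ce cE; have lF := linF (B := fun _ => true) cl ce cF0 cFS; have lH := linH cl ce cH.
have r1 := rHF (B := fun _ => true) cl ce cH cF0 cFS; have r2 := rHE cl ce cH cE; have r3 := rEF (B := fun _ => true) cl ce cB cH cE cF0 cFS Be.
pose H' (p : {poly C}) := - vH mu p.
have lH' : linf H' by move=> a x y; rewrite /H' lH opprD scalerN.
have r1' : forall x, H' (vE mu x) = vE mu (H' x) + (- 2%:R) *: vE mu x.
  by move=> x; rewrite /H' r2 (linfN lE) opprD scaleNr.
have r2' : forall x, H' (vF x) = vF (H' x) + 2%:R *: vF x.
  by move=> x; rewrite /H' r1 (linfN lF) opprD scaleNr opprK.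
have r3' : forall x, vF (vE mu x) = vE mu (vF x) + H' x.
  by move=> x; rewrite r3 /H' addrK.
have [act [Hm [He [Hf Hh]]]] := construct Hrel Hpbw lF lE lH' r1' r2' r3'.
exists {poly C}, act, 1, (fun p : {poly C} => p`_0); split => //.
- by rewrite Hf (hwE cl ce cE (v0 := 1)) // => i; rewrite coef1.
- by rewrite Hh /H' (hwH cl ce cH (v0 := 1)) ?scaleNr ?opprK // => i; rewrite coef1.
- by rewrite coef1.
split; first by move=> z; rewrite He cF0.
by move=> a x y; rewrite cl.
Qed.

End Models.

End P7.
Import P7.

Module P8.
Set Implicit Arguments. Unset Strict Implicit. Unset Printing Implicit Defensive.

Section Eigen.
Variables (C : numClosedFieldType) (V : lmodType C) (A : V -> V).
Hypothesis lA : linf A.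

Lemma eig_zero n (s : seq (C * V * C)) (lam : C) : size s = n ->
  (forall p, p \in s -> A p.1.2 = p.2 *: p.1.2 /\ p.2 != lam) ->
  A (\sum_(p <- s) p.1.1 *: p.1.2) = lam *: \sum_(p <- s) p.1.1 *: p.1.2 ->
  \sum_(p <- s) p.1.1 *: p.1.2 = 0.
Proof.
elim: n s => [|n IH] [|[[c x] mu0] s] //= Hsz Hs Heq; first by rewrite big_nil.
case: Hsz => Hsz.
set m := \sum_(p <- _) _ in Heq *.
pose s' := [seq ((p.1.1 * (p.2 - mu0)), p.1.2, p.2) | p <- s].
have Hs' : forall p, p \in s' -> A p.1.2 = p.2 *: p.1.2 /\ p.2 != lam.
  move=> p /mapP [q Hq ->] /=; apply: Hs; by rewrite inE Hq orbT.
have Hx : A x = mu0 *: x /\ mu0 != lam by apply: (Hs (c, x, mu0)); rewrite inE eqxx.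
have Am : forall t : seq (C * V * C), (forall p, p \in t -> A p.1.2 = p.2 *: p.1.2) ->
    A (\sum_(p <- t) p.1.1 *: p.1.2) - mu0 *: \sum_(p <- t) p.1.1 *: p.1.2 =
    \sum_(p <- [seq ((p.1.1 * (p.2 - mu0)), p.1.2, p.2) | p <- t]) p.1.1 *: p.1.2.
  move=> t Ht; rewrite big_map (linf_sum _ _ _ lA) scaler_sumr -sumrB.
  apply: eq_big_seq => p Hp /=; rewrite (linfZ lA) (Ht p Hp) scalerA scalerA.
  by rewrite -scalerBl; congr (_ *: _); ring.
have Hx2 : (lam == mu0) = false by apply/negbTE; rewrite eq_sym; exact: Hx.2.
have HsA : forall p, p \in (c, x, mu0) :: s -> A p.1.2 = p.2 *: p.1.2.
  by move=> p Hp; case: (Hs p Hp).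
have := Am _ HsA; rewrite Heq -scalerBl big_cons /= subrr mulr0 scale0r add0r.
move=> Hm'.
have Hs0 : \sum_(p <- s') p.1.1 *: p.1.2 = 0.
  apply: (IH s'); first by rewrite size_map.
    exact: Hs'.
  by rewrite -Hm' (linfZ lA) Heq !scalerA mulrC.
move: Hm'; rewrite -/s' Hs0 => /eqP; rewrite scaler_eq0 subr_eq0 Hx2.
by move=> /eqP.
Qed.
End Eigen.

End P8.
Import P8.

Module P9.
Set Implicit Arguments. Unset Strict Implicit. Unset Printing Implicit Defensive.

Section Span.
Variables (C : numClosedFieldType) (U : algType C) (e f h : U).
Hypothesis Hrel : sl2_relations e f h.

Lemma linf_lie (x : U) : linf (lie x).
Proof. by move=> a y z; rewrite lieL. Qed.

Definition i0 : 'I_3 := @Ordinal 3 0 isT.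
Definition i1 : 'I_3 := @Ordinal 3 1 isT.
Definition i2 : 'I_3 := @Ordinal 3 2 isT.

Lemma span_self X : ad_span e f h X X.
Proof. by exists [:: (1, [::])]; rewrite big_seq1 scale1r. Qed.

Lemma span_lin X (a : C) x y : ad_span e f h X x -> ad_span e f h X y ->
  ad_span e f h X (a *: x + y).
Proof.
move=> [sx ->] [sy ->]; exists ([seq (a * p.1, p.2) | p <- sx] ++ sy).
by rewrite big_cat big_map scaler_sumr; congr (_ + _); apply: eq_bigr => p _; rewrite scalerA.
Qed.

Lemma span_lie X i x : ad_span e f h X x -> ad_span e f h X (lie (sl2_gen e f h i) x).
Proof.
move=> [s ->]; exists [seq (p.1, i :: p.2) | p <- s].
rewrite big_map (linf_sum _ _ _ (linf_lie _)); apply: eq_bigr => p _.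
by rewrite lieZ.
Qed.

Lemma span_stable X : ad_stable e f h (ad_span e f h X).
Proof.
split.
- by exists [::]; rewrite big_nil.
- by move=> a x y; apply: span_lin.
- move=> x Hx; split; [exact: (span_lie i0 Hx)|exact: (span_lie i1 Hx)|exact: (span_lie i2 Hx)].
Qed.

Variable n : nat.
Variable w : U.
Hypothesis we : lie e w = 0.
Hypothesis wh : lie h w = n%:R *: w.

Definition rr j := iter j (lie f) w.

Lemma lie_h_rr j : lie h (rr j) = (n%:R - j%:R * 2) *: rr j.
Proof.
elim: j => [|j IH]; first by rewrite /= wh mul0r subr0.
rewrite /= jacobi IH (lhf Hrel) lieZl lieZ -scalerDl; congr (_ *: _); ring.
Qed.

Definition cfe j : C := if j is j'.+1 then j'.+1%:R * (n%:R - j'%:R) else 0.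

Lemma lie_e_rr j : lie e (rr j) = cfe j *: rr j.-1.
Proof.
elim: j => [|j IH]; first by rewrite /= we scale0r.
rewrite /= jacobi (lef Hrel) IH lieZ; case: j IH => [|j] IH /=.
  by rewrite scale0r addr0 wh mul1r subr0.
rewrite (lie_h_rr j.+1) -scalerDl; congr (_ *: _); ring.
Qed.

Definition Sp (x : U) := exists s : seq (C * nat), x = \sum_(p <- s) p.1 *: rr p.2.

Lemma Sp_stable : ad_stable e f h Sp.
Proof.
split.
- by exists [::]; rewrite big_nil.
- move=> a x y [sx ->] [sy ->]; exists ([seq (a * p.1, p.2) | p <- sx] ++ sy).
  by rewrite big_cat big_map scaler_sumr; congr (_ + _); apply: eq_bigr => p _; rewrite scalerA.
move=> x [s ->]; split.
- exists [seq (p.1 * cfe p.2, p.2.-1) | p <- s].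
  rewrite big_map (linf_sum _ _ _ (linf_lie _)); apply: eq_bigr => p _.
  by rewrite lieZ lie_e_rr scalerA.
- exists [seq (p.1, p.2.+1) | p <- s].
  by rewrite big_map (linf_sum _ _ _ (linf_lie _)); apply: eq_bigr => p _; rewrite lieZ.
- exists [seq (p.1 * (n%:R - p.2%:R * 2), p.2) | p <- s].
  rewrite big_map (linf_sum _ _ _ (linf_lie _)); apply: eq_bigr => p _.
  by rewrite lieZ lie_h_rr scalerA.
Qed.

Lemma R_sub_Sp X : ad_iso_V e f h (ad_span e f h X) n -> ad_span e f h X w -> w != 0 ->
  forall x, ad_span e f h X x -> Sp x.
Proof.
move=> [_ Hirr _] Rw wn0.
have rrR : forall j, ad_span e f h X (rr j).
  by elim=> [|j IH] //=; apply: (span_lie i1 IH).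
have SpR : forall x, Sp x -> ad_span e f h X x.
  move=> x [s ->]; elim: s => [|p s IH]; first by rewrite big_nil; case: (span_stable X).
  by rewrite big_cons; apply: span_lin.
case: (Hirr Sp Sp_stable SpR) => [H0|//].
have : Sp w by exists [:: (1, 0%N)]; rewrite big_seq1 scale1r.
by move/H0 => Hw; rewrite Hw eqxx in wn0.
Qed.


Lemma zero_wt N x : n = (2 * N)%N -> Sp x -> lie h x = 0 -> exists k : C, x = k *: rr N.
Proof.
move=> HnN [s ->] Hh.
pose t : seq (C * U * C) := [seq (p.1, rr p.2, n%:R - p.2%:R * 2) | p <- s & p.2 != N].
have Hsp : \sum_(p <- s) p.1 *: rr p.2 =
    (\sum_(p <- s | p.2 == N) p.1) *: rr N + \sum_(p <- t) p.1.1 *: p.1.2.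
  rewrite (bigID (fun p : C * nat => p.2 == N)) /= scaler_suml; congr (_ + _).
    by apply: eq_bigr => p /eqP ->.
  by rewrite big_map big_filter.
exists (\sum_(p <- s | p.2 == N) p.1); rewrite Hsp -[RHS]addr0; congr (_ + _).
apply: (@eig_zero _ _ _ (linf_lie h) (size t) t 0) => //.
  move=> p /mapP [q]; rewrite mem_filter => /andP [HqN _] -> /=; split.
    exact: lie_h_rr.
  rewrite HnN subr_eq0 -natrM eqr_nat mulnC eqn_pmul2r //.
  by rewrite eq_sym.
move: Hh; rewrite Hsp lieD lieZ lie_h_rr HnN mulnC natrM subrr scale0r scaler0 add0r.
by move=> ->; rewrite scale0r.
Qed.

End Span.

End P9.
Import P9.

Module P10.
Set Implicit Arguments. Unset Strict Implicit. Unset Printing Implicit Defensive.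

Section ModFacts.
Variables (C : numClosedFieldType) (U : algType C) (e f h : U).
Hypothesis Hrel : sl2_relations e f h.
Hypothesis Hpbw : PBW_basis e f h.
Variables (M : lmodType C) (act : U -> M -> M).
Hypothesis Hm : is_Umodule act.

Lemma linf_act u : linf (act u).
Proof. by case: Hm => H1 _ _ _ a x y; rewrite H1. Qed.

Lemma actu0 v : act 0 v = 0.
Proof.
case: Hm => _ H2 _ _; have := H2 1 0 0 v; rewrite !scale1r addr0 => H0.
by apply: (@addrI _ (act 0 v)); rewrite addr0 -H0.
Qed.
Lemma actuD x y v : act (x + y) v = act x v + act y v.
Proof. by case: Hm => _ H2 _ _; have := H2 1 x y v; rewrite !scale1r. Qed.
Lemma actuZ a x v : act (a *: x) v = a *: act x v.
Proof. by case: Hm => _ H2 _ _; have := H2 a x 0 v; rewrite !addr0 actu0 addr0. Qed.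
Lemma actuN x v : act (- x) v = - act x v.
Proof. by rewrite -[- x]scaleN1r actuZ scaleN1r. Qed.
Lemma actuB x y v : act (x - y) v = act x v - act y v.
Proof. by rewrite actuD actuN. Qed.
Lemma act_mul x y v : act (x * y) v = act x (act y v).
Proof. by case: Hm. Qed.
Lemma act_1 v : act 1 v = v.
Proof. by case: Hm. Qed.
Lemma act_sumu (I : Type) (r : seq I) (F : I -> U) v :
  act (\sum_(i <- r) F i) v = \sum_(i <- r) act (F i) v.
Proof.
elim: r => [|i r IH]; first by rewrite !big_nil actu0.
by rewrite !big_cons actuD IH.
Qed.

Lemma act_pow g n v : act (g ^+ n) v = iter n (act g) v.
Proof. by elim: n => [|n IH]; rewrite ?expr0 ?act_1 // exprS act_mul IH. Qed.

Lemma act_mono a b c v : act (pbw_mono e f h a b c) v =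
  iter a (act f) (iter b (act h) (iter c (act e) v)).
Proof. by rewrite /pbw_mono !act_mul !act_pow. Qed.

Lemma act_lie x y v : act (lie x y) v = act x (act y v) - act y (act x v).
Proof. by rewrite /lie actuB !act_mul. Qed.

Lemma hF x : act h (act f x) = act f (act h x) + (- 2%:R) *: act f x.
Proof.
have := act_lie h f x; rewrite (lhf Hrel) actuZ => ->.
by rewrite addrC subrK.
Qed.

Lemma iter_zero (g : M -> M) n : linf g -> iter n g 0 = 0.
Proof. by move=> lg; elim: n => //= n ->; rewrite (linf0 lg). Qed.

Lemma eigF s lam : act h s = lam *: s -> forall a,
  act h (iter a (act f) s) = (lam - a%:R * 2) *: iter a (act f) s.
Proof.
move=> Hs; elim=> [|a IH]; first by rewrite /= Hs mul0r subr0.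
rewrite /= hF IH (linfZ (linf_act f)) -scalerDl; congr (_ *: _); ring.
Qed.

Lemma span_s s lam : act e s = 0 -> act h s = lam *: s ->
  forall u, exists l : seq (C * nat), act u s = \sum_(p <- l) p.1 *: iter p.2 (act f) s.
Proof.
move=> Hes Hhs; apply: (pbw_ind Hpbw).
  move=> a x y [lx Hx] [ly Hy]; exists ([seq (a * p.1, p.2) | p <- lx] ++ ly).
  case: Hm => _ H2 _ _; rewrite H2 Hx Hy big_cat big_map scaler_sumr; congr (_ + _).
  by apply: eq_bigr => p _; rewrite scalerA.
move=> a b [|c].
  exists [:: (lam ^+ b, a)]; rewrite big_seq1 act_mono /=.
  have -> : iter b (act h) s = lam ^+ b *: s.
    elim: b => [|b IH] /=; first by rewrite expr0 scale1r.
    by rewrite IH (linfZ (linf_act h)) Hhs scalerA exprS mulrC.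
  by rewrite (linfZ (linf_iter a (linf_act f))).
exists [::]; rewrite big_nil act_mono.
have -> : iter c.+1 (act e) s = 0.
  elim: c => [|c IH]; first by rewrite /= Hes.
  by rewrite iterS IH (linf0 (linf_act e)).
by rewrite !iter_zero //; exact: linf_act.
Qed.

Lemma gen_s s : irreducible_module act -> s != 0 -> forall m, exists u, m = act u s.
Proof.
move=> [_ Hirr] sn0.
have Hsub : is_submodule act (fun m => exists u, m = act u s).
  split.
  - by exists 0; rewrite actu0.
  - move=> a v w [u1 ->] [u2 ->]; exists (a *: u1 + u2).
    by case: Hm => _ H2 _ _; rewrite H2.
  - by move=> x v [u ->]; exists (x * u); rewrite act_mul.
case: (Hirr _ Hsub) => [H0|//].
by have := H0 s (ex_intro _ 1 (esym (act_1 s))) => Hs; rewrite Hs eqxx in sn0.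
Qed.

Lemma wt_zero s lam m lam' : irreducible_module act -> s != 0 ->
  act e s = 0 -> act h s = lam *: s -> act h m = lam' *: m ->
  (forall a : nat, lam' != lam - a%:R * 2) -> m = 0.
Proof.
move=> Hirr sn0 Hes Hhs Hhm Hne.
have [u Hu] := gen_s Hirr sn0 m.
have [l Hl] := span_s Hes Hhs u.
pose t : seq (C * M * C) := [seq (p.1, iter p.2 (act f) s, lam - p.2%:R * 2) | p <- l].
have Ht : m = \sum_(p <- t) p.1.1 *: p.1.2 by rewrite Hu Hl big_map.
rewrite Ht; apply: (@eig_zero _ _ _ (linf_act h) (size t) t lam') => //.
  move=> p /mapP [q _ ->] /=; split; first exact: eigF.
  by rewrite eq_sym.
by rewrite -Ht.
Qed.

End ModFacts.

End P10.
Import P10.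

Module P11.
Set Implicit Arguments. Unset Strict Implicit. Unset Printing Implicit Defensive.

Lemma natC_inj (C : numClosedFieldType) (x y : nat) : (x%:R : C) = y%:R -> x = y.
Proof. by move/eqP; rewrite eqr_nat => /eqP. Qed.

Section MainFacts.
Variables (C : numClosedFieldType) (U : algType C) (e f h : U).
Hypothesis Hrel : sl2_relations e f h.
Hypothesis Hpbw : PBW_basis e f h.

Lemma act_peval (M : lmodType C) (act : U -> M -> M) (Hm : is_Umodule act) (p : {poly C}) (X : U) (w : M) (c : C) :
  act X w = c *: w -> act (peval p X) w = p.[c] *: w.
Proof.
move=> HX; rewrite /peval (act_sumu Hm) horner_coef scaler_suml; apply: eq_bigr => i _.
rewrite (actuZ Hm) (act_pow Hm) -scalerA; congr (_ *: _).
elim: (nat_of_ord i) => [|k IH]; first by rewrite expr0 scale1r.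
by rewrite iterS IH (linfZ (linf_act Hm X)) HX scalerA exprS mulrC.
Qed.

Lemma span_kill (M : lmodType C) (act : U -> M -> M) (Hm : is_Umodule act) (Q : U) :
  (forall m, act Q m = 0) -> forall x, ad_span e f h Q x -> forall m, act x m = 0.
Proof.
move=> HQ x [s ->] m; rewrite (act_sumu Hm) big1 // => p _.
rewrite (actuZ Hm); suff -> : act (adw [seq sl2_gen e f h i | i <- p.2] Q) m = 0 by rewrite scaler0.
elim: p.2 m => [|i l IH] m //=.
by rewrite (act_lie Hm) IH (linf0 (linf_act Hm _)) IH subrr.
Qed.

Variables (T : U -> U).
Hypothesis HT : is_transpose e f h T.

Lemma linT : linf T.
Proof. by case: HT. Qed.
Lemma TM x y : T (x * y) = T y * T x.
Proof. by case: HT. Qed.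
Lemma T1 : T 1 = 1.
Proof. by case: HT. Qed.
Lemma Te : T e = - e. Proof. by case: HT => _ _ _ []. Qed.
Lemma Tf : T f = - f. Proof. by case: HT => _ _ _ []. Qed.
Lemma Th : T h = - h. Proof. by case: HT => _ _ _ []. Qed.

Lemma Tpow x n : T (x ^+ n) = T x ^+ n.
Proof. by elim: n => [|n IH]; rewrite ?expr0 ?T1 // exprS TM IH exprSr. Qed.

Lemma T_lie_gen i x : T (lie (sl2_gen e f h i) x) = lie (sl2_gen e f h i) (T x).
Proof.
have Hg : T (sl2_gen e f h i) = - sl2_gen e f h i.
  by rewrite /sl2_gen; case: ifP => _; [exact: Te|case: ifP => _; [exact: Tf|exact: Th]].
rewrite /lie (linfD linT) (linfN linT) !TM Hg mulrN mulNr opprK addrC.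
done.
Qed.

Lemma T_span Q x : ad_span e f h Q x -> ad_span e f h (T Q) (T x).
Proof.
move=> [s ->]; exists s; rewrite (linf_sum _ _ _ linT); apply: eq_bigr => p _.
rewrite (linfZ linT); congr (_ *: _).
by elim: p.2 => [|i l IH] //=; rewrite T_lie_gen IH.
Qed.

Lemma TT x : T (T x) = x.
Proof.
move: x; apply: (pbw_ind Hpbw) => [a x y IHx IHy|a b c].
  by rewrite !linT IHx IHy.
have TTM : forall x y, T (T (x * y)) = T (T x) * T (T y).
  by move=> x y; rewrite (TM x y) (TM (T y) (T x)).
have TTg : forall g n, T (T g) = g -> T (T (g ^+ n)) = g ^+ n.
  by move=> g n Hg; rewrite (Tpow g n) (Tpow (T g) n) Hg.
have TTe : T (T e) = e by rewrite Te (linfN linT) Te opprK.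
have TTf : T (T f) = f by rewrite Tf (linfN linT) Tf opprK.
have TTh : T (T h) = h by rewrite Th (linfN linT) Th opprK.
by rewrite /= /pbw_mono !TTM !TTg.
Qed.

Lemma T_peval p : T (peval p h) = peval p (- h).
Proof.
rewrite /peval (linf_sum _ _ _ linT); apply: eq_bigr => i _.
by rewrite (linfZ linT) Tpow Th.
Qed.

End MainFacts.

End P11.
Import P11.

Theorem lemma3p5 (C : numClosedFieldType) (U : algType C) (e f h : U)
  (T : U -> U) (p : int) (q : nat) (Q u1 u2 : U) (p1 p2 : {poly C}) :
  is_U_sl2 e f h ->
  is_transpose e f h T ->
  admissible p q ->
  ad_iso_V e f h (ad_span e f h Q) (2 * admN p q) ->
  ad_iso_V e f h (ad_span e f h (T Q)) (2 * admN p q) ->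
  ad_span e f h Q u1 -> zero_weight h u1 -> u1 != 0 ->
  ad_span e f h (T Q) u2 -> zero_weight h u2 -> u2 != 0 ->
  (exists y : U, u1 = peval p1 h + y * e) ->
  (exists y : U, u2 = peval p2 h + y * f) ->
  forall mu : C,
    (Vmu_annihilated_by e h Q mu <-> p1.[mu] = 0) /\
    (p1.[mu] = 0 <-> p2.[- mu] = 0).
Proof.
move=> [Hrel Hpbw] HT _ HR HRT Ru1 zu1 u1n0 Ru2 zu2 u2n0 [y1 Hu1] [y2 Hu2] mu.
set N := admN p q.
case: (HR) => _ _ [w [Rw wn0 we wh]].
case: (HRT) => _ _ [w' [Rw' wn0' we' wh']].
have SpR := R_sub_Sp Hrel we wh HR Rw wn0.
have SpRT := R_sub_Sp Hrel we' wh' HRT Rw' wn0'.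
have [k1 Hk1] := zero_wt Hrel wh (N:=N) erefl (SpR _ Ru1) zu1.
have k1n0 : k1 != 0 by apply: contraNneq u1n0 => k0; rewrite Hk1 k0 scale0r.
split.
  split.
  - move=> Hann.
    have [M [act [v [Hm [Hirr [vn0 ve vh]]]]]] := exists_irrep Hrel Hpbw mu.
    have HQ := Hann M act Hm Hirr (ex_intro _ v (And3 vn0 ve vh)).
    have := span_kill Hm HQ Ru1 v.
    rewrite Hu1 (actuD Hm) (act_mul Hm) ve (linf0 (linf_act Hm _)) addr0 (act_peval Hm _ vh).
    by move/eqP; rewrite scaler_eq0 (negbTE vn0) orbF => /eqP.
  move=> Hp1 M act Hm Hirr [v [vn0 ve vh]].
  have hact : forall r m, act h (act r m) = act (lie h r) m + act r (act h m).
    by move=> r m; rewrite (act_lie Hm) subrK.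
  have eact : forall r m, act e (act r m) = act (lie e r) m + act r (act e m).
    by move=> r m; rewrite (act_lie Hm) subrK.
  have rN : act (rr f w N) v = 0.
    have := congr1 (fun x => act x v) Hu1.
    rewrite /= (actuD Hm) (act_mul Hm) ve (linf0 (linf_act Hm _)) addr0 (act_peval Hm _ vh).
    rewrite Hp1 scale0r Hk1 (actuZ Hm) => /eqP; rewrite scaler_eq0 (negbTE k1n0) /=.
    by move/eqP.
  have rlt : forall j, (j < N)%N -> act (rr f w j) v = 0.
    move=> j Hj.
    apply: (wt_zero Hrel Hpbw Hm (s := v) (lam := mu) (lam' := mu + ((2 * N)%:R - j%:R * 2))) => //.
      by rewrite hact (lie_h_rr Hrel wh) vh (actuZ Hm) (linfZ (linf_act Hm _)) -scalerDl addrC.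
    move=> a; apply/eqP => Heq.
    have : (((2 * N) + a * 2)%:R : C) = (j * 2)%:R.
      apply/eqP; rewrite -subr_eq0; apply/eqP.
      transitivity ((mu + ((2 * N)%:R - j%:R * 2)) - (mu - a%:R * 2)).
        by rewrite !natrD !natrM; ring.
      by rewrite Heq subrr.
    move/natC_inj; lia.
  have rge : forall k, act (rr f w (N + k)) v = 0.
    elim=> [|k IH]; first by rewrite addn0.
    set m := act (rr f w (N + k.+1)) v.
    case: (eqVneq m 0) => // mn0; exfalso.
    have me : act e m = 0.
      rewrite /m eact (lie_e_rr Hrel we wh) (actuZ Hm) addnS /= IH scaler0 ve.
      by rewrite (linf0 (linf_act Hm _)) addr0.
    have mh : act h m = (mu + ((2 * N)%:R - (N + k.+1)%:R * 2)) *: m.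
      by rewrite /m hact (lie_h_rr Hrel wh) vh (actuZ Hm) (linfZ (linf_act Hm _)) -scalerDl addrC.
    have := wt_zero Hrel Hpbw Hm Hirr mn0 me mh vh.
    suff Hne : (forall a : nat, mu != mu + ((2 * N)%:R - (N + k.+1)%:R * 2) - a%:R * 2).
      by move=> /(_ Hne) v0; rewrite v0 eqxx in vn0.
    move=> a; apply/eqP => Heq.
    have : (((2 * N))%:R : C) = ((N + k.+1) * 2 + a * 2)%:R.
      apply/eqP; rewrite -subr_eq0; apply/eqP.
      transitivity ((mu + ((2 * N)%:R - (N + k.+1)%:R * 2) - a%:R * 2) - mu).
        by rewrite !natrD !natrM; ring.
      by rewrite -Heq subrr.
    move/natC_inj; lia.
  have rall : forall j, act (rr f w j) v = 0.
    move=> j; case: (ltnP j N) => [/rlt //|HNj]; rewrite -(subnKC HNj); exact: rge.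
  have Rv : forall x, ad_span e f h Q x -> act x v = 0.
    move=> x /SpR [s ->]; rewrite (act_sumu Hm) big1 // => pp _.
    by rewrite (actuZ Hm) rall scaler0.
  pose K m := forall x, ad_span e f h Q x -> act x m = 0.
  have Kg : forall i m, K m -> K (act (sl2_gen e f h i) m).
    move=> i m Km x Rx; set g := sl2_gen e f h i.
    have -> : act x (act g m) = act (x * g) m by rewrite (act_mul Hm).
    have -> : x * g = g * x - lie g x by rewrite (lieE g x) addrK.
    rewrite (actuB Hm) (act_mul Hm) Km // (linf0 (linf_act Hm _)) Km ?subrr //.
    exact: span_lie.
  have Kit : forall i n m, K m -> K (iter n (act (sl2_gen e f h i)) m).
    by move=> i; elim=> [|n IH] m Km //=; apply: Kg; apply: IH.
  have Ksub : is_submodule act K.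
    split.
    - by move=> x Rx; rewrite (linf0 (linf_act Hm _)).
    - by move=> a v1 v2 K1 K2 x Rx; rewrite (linf_act Hm) K1 // K2 // scaler0 addr0.
    move=> u; move: u; apply: (pbw_ind Hpbw) => [a x y IHx IHy|a b c] m Km z Rz.
      by case: (Hm) => _ H2 _ _; rewrite H2 (linf_act Hm) (IHx m Km z Rz) (IHy m Km z Rz) scaler0 addr0.
    rewrite (act_mono e f h Hm).
    exact: (Kit i1 a _ (Kit i2 b _ (Kit i0 c _ Km))).
  case: Hirr => _ Hirr'; case: (Hirr' K Ksub) => [H0|Hall].
    by have := H0 v Rv => v0; rewrite v0 eqxx in vn0.
  by move=> m; apply: (Hall m Q); apply: span_self.
have RTu1 := T_span HT Ru1.
have zTu1 : lie h (T u1) = 0.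
  by rewrite -(T_lie_gen HT i2 u1) /=; move: zu1; rewrite /zero_weight => ->; rewrite (linf0 (linT HT)).
have [k3 Hk3] := zero_wt Hrel wh' (N:=N) erefl (SpRT _ RTu1) zTu1.
have [k2 Hk2] := zero_wt Hrel wh' (N:=N) erefl (SpRT _ Ru2) zu2.
have k3n0 : k3 != 0.
  apply: contraNneq u1n0 => k0; rewrite -(TT Hpbw HT u1) Hk3 k0 scale0r.
  by rewrite (linf0 (linT HT)).
have k2n0 : k2 != 0 by apply: contraNneq u2n0 => k0; rewrite Hk2 k0 scale0r.
have Hu2T : u2 = (k2 / k3) *: T u1 by rewrite Hk2 Hk3 scalerA divfK.
have key : forall lam, p2.[lam] = (k2 / k3) * p1.[- lam].
  move=> lam.
  have [M [act [w0 [c0 [Hm wf wh0 c0w [c0e c0l]]]]]] := exists_lowest Hrel Hpbw lam.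
  have c00 : c0 0 = 0.
    have := c0l 1 0 0; rewrite scale1r addr0 mul1r => H0.
    by apply: (@addrI _ (c0 0)); rewrite addr0 -H0.
  have c0D : forall x y, c0 (x + y) = c0 x + c0 y by move=> x y; have := c0l 1 x y; rewrite scale1r mul1r.
  have c0Z : forall a x, c0 (a *: x) = a * c0 x by move=> a x; have := c0l a x 0; rewrite !addr0 c00 addr0.
  have A2 : act u2 w0 = p2.[lam] *: w0.
    by rewrite Hu2 (actuD Hm) (act_mul Hm) wf (linf0 (linf_act Hm _)) addr0 (act_peval Hm _ wh0).
  have whN : act (- h) w0 = (- lam) *: w0 by rewrite (actuN Hm) wh0 scaleNr.
  have A1 : c0 (act (T u1) w0) = p1.[- lam].
    rewrite Hu1 (linfD (linT HT)) (T_peval HT) (TM HT) (Te HT) (actuD Hm) (act_peval Hm _ whN).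
    rewrite mulNr (actuN Hm) (act_mul Hm) c0D c0Z c0w mulr1.
    by rewrite -scaleN1r c0Z c0e mulr0 addr0.
  have := congr1 (fun x => c0 (act x w0)) Hu2T.
  by rewrite /= A2 (actuZ Hm) c0Z A1 c0Z c0w mulr1.
rewrite key opprK; split => [->|/eqP]; first by rewrite mulr0.
by rewrite mulf_eq0 mulf_eq0 invr_eq0 (negbTE k2n0) (negbTE k3n0) /= => /eqP.
Qed.
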